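(* Fix an integer $M\ge 1$, $\lambda>0$, $\epsilon>0$, $L_{\max}>0$, a decoding error probability $\delta\in(0,0.5)$ and a channel gain $|h_{ab}|^2>0$. Let $X$ be a random variable that is the sum of $M$ independent exponential random variables each with mean $1/\lambda$ (i.e. $X$ has density $\frac{\lambda^M x^{M-1}e^{-\lambda x}}{(M-1)!}$, $x\ge 0$), and for $P_a>0$ define $$g(P_a)=\mathbb{E}\left[\ln(XP_a+1)-\frac{XP_a}{XP_a+1}\right].$$ For $L_M>0$ and $P_a>0$ let $$R(L_M,P_a)=\log_2\left(1+P_a|h_{ab}|^2\right)-\sqrt{\frac{1}{L_M}\left(1-\frac{1}{(1+P_a|h_{ab}|^2)^2}\right)}\,\frac{Q^{-1}(\delta)}{\ln 2}.$$ Consider the problem of maximizing $L_M\,R(L_M,P_a)(1-\delta)$ over $L_M$ and $P_a$ subject to $L_M\, g(P_a)\le 2\epsilon^2$ and $L_M\le L_{\max}$. Then, for a given $P_a$, the optimal number of channel uses is $$L_M^*=\min\left(L_{\max},\frac{2\epsilon^2}{g(P_a)}\right),$$ and the optimal transmit power $P_a$ is a solution of the one-dimensional problem of maximizing $L_M^*\,R(L_M^*,P_a)(1-\delta)$ over $P_a>0$.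
   Context: $Q^{-1}$ denotes the inverse of the Gaussian Q-function $Q(x)=\frac{1}{\sqrt{2\pi}}\int_x^\infty e^{-t^2/2}dt$. The quantity $L_M\left(\ln(XP_a+1)-\frac{XP_a}{XP_a+1}\right)$ is the Kullback–Leibler divergence between the distributions of $L_M$ i.i.d. observations $\mathcal{CN}(\mathbf{0},\mathbf{I}_M)$ and $\mathcal{CN}(\mathbf{0},P_a\mathbf{h}\mathbf{h}^H+\mathbf{I}_M)$ with $\|\mathbf{h}\|^2=X$, so the constraint $L_M g(P_a)\le 2\epsilon^2$ is the expected-KL covertness constraint; $L_M$ is treated as a continuous variable.
   Formalization: Optimality of $L_M^*$ for a given $P_a$ holds only when $L_M^*R(L_M^*,P_a)(1-\delta)\ge 0$, and the equivalence with the one-dimensional problem is stated only for joint maximizers of positive objective value and one-dimensional solutions of nonnegative value. Apart from conventions, each condition added here is assumed in the paper as well or is needed for the statement above to hold. *)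

(* Defs.v *)
From HB Require Import structures.
From mathcomp Require Import all_boot all_order all_algebra.
From mathcomp Require Import all_classical all_reals all_analysis.
Set Implicit Arguments. Unset Strict Implicit. Unset Printing Implicit Defensive.
Import Order.TTheory GRing.Theory Num.Theory Num.Def.
Local Open Scope classical_set_scope.
Local Open Scope ring_scope.

Section covert.
Context {R : realType}.

Definition erlang_pdf (M : nat) (lam x : R) : R :=
  lam ^+ M * x ^+ (M - 1) * expR (- (lam * x)) / ((M - 1)`!)%:R.

Definition gfun (M : nat) (lam P : R) : R :=
  Rintegral lebesgue_measure `[0, +oo[%classic
    (fun x => erlang_pdf M lam x * (ln (x * P + 1) - x * P / (x * P + 1))).

Definition Qfun (x : R) : R :=
  (Num.sqrt (2 * pi))^-1 *
  Rintegral lebesgue_measure `[x, +oo[%classic (fun t => expR (- (t ^+ 2) / 2)).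

Definition log2 (y : R) : R := ln y / ln 2.

(* R(L_M, P_a); qinv stands for Q^{-1}(delta), h for |h_ab|^2 *)
Definition rateR (h qinv L P : R) : R :=
  log2 (1 + P * h)
  - Num.sqrt (L^-1 * (1 - ((1 + P * h) ^+ 2)^-1)) * (qinv / ln 2).

Definition objective (h qinv delta L P : R) : R :=
  L * rateR h qinv L P * (1 - delta).

Definition feasible (M : nat) (lam eps Lmax L P : R) : Prop :=
  0 < L /\ 0 < P /\ L * gfun M lam P <= 2 * eps ^+ 2 /\ L <= Lmax.

Definition Lstar (M : nat) (lam eps Lmax P : R) : R :=
  Num.min Lmax (2 * eps ^+ 2 / gfun M lam P).

End covert.

(* Main.v *)
Require Import Defs.
From HB Require Import structures.
From mathcomp Require Import all_boot all_order all_algebra.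
From mathcomp Require Import all_classical all_reals all_analysis.
From mathcomp Require Import ring lra.
Import Order.TTheory GRing.Theory Num.Theory Num.Def.
Local Open Scope ring_scope.
Section gf.
Local Open Scope classical_set_scope.


Lemma ln_ge1V (R : realType) (z : R) : 0 < z -> 1 - z^-1 <= ln z.
Proof.
move=> z0.
have := expR_ge1Dx (- ln z).
by rewrite expRN lnK ?posrE //; lra.
Qed.

Lemma phi_ge0 (R : realType) (y : R) : 0 <= y -> y / (y + 1) <= ln (y + 1).
Proof.
move=> y0.
have z0 : 0 < y + 1 by lra.
have -> : y / (y + 1) = 1 - (y + 1)^-1.
  by field; rewrite gt_eqF.
exact: ln_ge1V.
Qed.

Lemma phi_low (R : realType) (P y : R) : 0 < P -> P <= y ->
  (1 - (Num.sqrt (P + 1))^-1) ^+ 2 <= ln (y + 1) - y / (y + 1).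
Proof.
move=> P0 Py.
have z0 : 0 < y + 1 by lra.
set s := Num.sqrt (y + 1).
have s0 : 0 < s by rewrite sqrtr_gt0.
have ys : y + 1 = s ^+ 2 by rewrite sqr_sqrtr // ltW.
have hln : ln (y + 1) = 2 * ln s by rewrite ys lnXn // mulr_natl.
have hs := @ln_ge1V R s s0.
have -> : y / (y + 1) = 1 - (s ^+ 2)^-1.
  by rewrite -ys; field; rewrite gt_eqF.
set t := Num.sqrt (P + 1).
have t1 : 1 < t by rewrite -sqrtr1 ltr_sqrt; lra.
have ts : t <= s by rewrite ler_sqrt; lra.
have t0 : 0 < t by lra.
have u0 : 0 < s^-1 by rewrite invr_gt0.
have uu : s^-1 <= t^-1 by rewrite lef_pV2 ?posrE.
have u1 : t^-1 < 1 by rewrite invf_lt1.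
rewrite hln -exprVn.
set u := s^-1 in hs u0 uu *.
set v := t^-1 in uu u1 *.
have : u ^+ 2 = u * u by rewrite expr2.
move=> e; rewrite e. 
nra.
Qed.

Lemma f_upper (R : realType) (n : nat) (lam P x : R) : 0 < lam -> 0 < P -> 0 <= x ->
  erlang_pdf n.+1 lam x * (ln (x * P + 1) - x * P / (x * P + 1)) <=
  (2 ^+ n.+1 * (n.+1)`!%:R * P / (n`!)%:R / (lam / 2)) * exponential_pdf (lam / 2) x.
Proof.
move=> l0 P0 x0.
have y0 : 0 <= x * P by rewrite mulr_ge0 // ltW.
have hphi : ln (x * P + 1) - x * P / (x * P + 1) <= x * P.
  have : 0 <= x * P / (x * P + 1) by rewrite divr_ge0 //; lra.
  have := @le_ln1Dx R (x * P) ltac:(lra).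
  rewrite addrC; lra.
have nf : 0 < (n`!)%:R :> R by rewrite ltr0n fact_gt0.
have nf1 : 0 < ((n.+1)`!)%:R :> R by rewrite ltr0n fact_gt0.
have E2 : 0 < expR (- (lam * x)) := expR_gt0 _.
have E1 : 0 < expR (lam * x / 2) := expR_gt0 _.
have key : (lam * x) ^+ n.+1 <= 2 ^+ n.+1 * (n.+1)`!%:R * expR (lam * x / 2).
  have lx : 0 <= lam * x / 2 by rewrite divr_ge0 // mulr_ge0 // ltW.
  have := @expR_ge1Dxn R (lam * x / 2) n lx.
  rewrite exprMn exprVn => h.
  have h' : (lam * x) ^+ n.+1 / 2 ^+ n.+1 / (n.+1)`!%:R <= expR (lam * x / 2).
    by apply: le_trans h; rewrite lerDr.
  have b0 : 0 <= 2 ^+ n.+1 * (n.+1)`!%:R :> R by rewrite mulr_ge0 ?exprn_ge0 ?ltW.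
  have := ler_wpM2l b0 h'.
  have -> // : 2 ^+ n.+1 * (n.+1)`!%:R * ((lam * x) ^+ n.+1 / 2 ^+ n.+1 / (n.+1)`!%:R)
     = (lam * x) ^+ n.+1.
  by field; rewrite !gt_eqF ?exprn_gt0.
rewrite exponential_pdfE // /erlang_pdf subn1 /=.
have e3 : expR (- (lam / 2) * x) = expR (lam * x / 2) * expR (- (lam * x)).
  by rewrite -expRD; congr expR; field.
rewrite e3.
apply: (le_trans (y := lam ^+ n.+1 * x ^+ n * expR (- (lam * x)) / (n`!)%:R * (x * P))).
  apply: ler_wpM2l hphi.
  apply: divr_ge0; last exact: ltW.
  by rewrite !mulr_ge0 ?exprn_ge0 // ltW.
have -> : lam ^+ n.+1 * x ^+ n * expR (- (lam * x)) / (n`!)%:R * (x * P) =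
  (lam * x) ^+ n.+1 * (P * expR (- (lam * x)) / (n`!)%:R).
  by rewrite exprMn [x ^+ n.+1]exprS; field; rewrite gt_eqF.
have -> : 2 ^+ n.+1 * (n.+1)`!%:R * P / (n`!)%:R / (lam / 2) *
   (lam / 2 * (expR (lam * x / 2) * expR (- (lam * x)))) =
  (2 ^+ n.+1 * (n.+1)`!%:R * expR (lam * x / 2)) * (P * expR (- (lam * x)) / (n`!)%:R).
  by field; rewrite !gt_eqF.
apply: ler_wpM2r => //.
by rewrite divr_ge0 ?mulr_ge0 ?ltW.
Qed.
Lemma meas_g (R : realType) (M : nat) (lam P : R) :
  measurable_fun [set: R] (fun x : R => erlang_pdf M lam x *
     (ln (x * P + 1) - (1 - expR (- ln (x * P + 1))))).
Proof.
have maff : measurable_fun [set: R] (fun x : R => x * P + 1).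
  apply: measurable_realfun.measurable_funD => //; apply: measurable_realfun.measurable_funM => //.
have mln : measurable_fun [set: R] (fun x : R => ln (x * P + 1)).
  exact: (measurableT_comp (@measurable_realfun.measurable_ln R) maff).
apply: measurable_realfun.measurable_funM.
  rewrite /erlang_pdf.
  apply: measurable_realfun.measurable_funM => //.
  apply: measurable_realfun.measurable_funM.
    apply: measurable_realfun.measurable_funM => //.
  apply: (measurableT_comp (@measurable_realfun.measurable_expR R)).
  apply: measurable_realfun.measurable_funN; apply: measurable_realfun.measurable_funM => //.
apply: measurable_realfun.measurable_funB => //.
apply: measurable_realfun.measurable_funB => //.
apply: (measurableT_comp (@measurable_realfun.measurable_expR R)).
exact: measurable_realfun.measurable_funN.
Qed.

Lemma gfun_gt0 (R : realType) (M : nat) (lam P : R) :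
  (1 <= M)%N -> 0 < lam -> 0 < P -> 0 < gfun M lam P.
Proof.
case: M => [//|n] _ l0 P0.
pose f := fun x : R => erlang_pdf n.+1 lam x * (ln (x * P + 1) - x * P / (x * P + 1)).
pose D := `[0, +oo[%classic : set R.
have mD : measurable D by exact: measurable_itv.
have Dx : forall x, D x -> 0 <= x by move=> x; rewrite /D /= in_itv /= andbT.
have nf : 0 < (n`!)%:R :> R by rewrite ltr0n fact_gt0.
have erl0 : forall x, 0 <= x -> 0 <= erlang_pdf n.+1 lam x.
  move=> x x0; rewrite /erlang_pdf; apply: divr_ge0; last exact: ltW.
  by rewrite !mulr_ge0 ?exprn_ge0 ?expR_ge0 // ltW.
have fge0 : forall x, D x -> 0 <= f x.
  move=> x /Dx x0; apply: mulr_ge0; first exact: erl0.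
  rewrite subr_ge0; apply: phi_ge0.
  by rewrite mulr_ge0 // ltW.
have mf : measurable_fun D f.
  apply: (eq_measurable_fun (fun x : R => erlang_pdf n.+1 lam x *
     (ln (x * P + 1) - (1 - expR (- ln (x * P + 1)))))).
    move=> x; rewrite inE => /Dx x0.
    have z0 : 0 < x * P + 1 by rewrite ltr_wpDl // mulr_ge0 // ltW.
    rewrite /f expRN lnK ?posrE //.
    by congr (_ * (_ - _)); field; rewrite gt_eqF.
  by apply: measurable_funTS; exact: meas_g.
pose K := 2 ^+ n.+1 * (n.+1)`!%:R * P / (n`!)%:R / (lam / 2).
have intf : lebesgue_measure.-integrable D (EFin \o f).
  apply: (@le_integrable _ _ _ lebesgue_measure D mD (EFin \o f) (EFin \o (fun x => K * exponential_pdf (lam / 2) x))).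
  - exact/measurable_realfun.measurable_EFinP.
  - move=> x Dx0 /=; rewrite lee_fin.
    rewrite ger0_norm ?fge0 //.
    apply: le_trans (ler_norm _).
    exact: f_upper (Dx _ Dx0).
  - apply: (integrableS (E := setT)) => //.
    have l2 : 0 < lam / 2 by rewrite divr_gt0.
    exact: (integrableZl measurableT K (integrable_exponential_pdf l2)).
have Ifin : (\int[lebesgue_measure]_(x in D) (f x)%:E)%E \is a fin_num.
  by apply: integrable_fin_num => //; exact: measurable_itv.
set c := lam ^+ n.+1 * expR (- (lam * 2)) / (n`!)%:R * (1 - (Num.sqrt (P + 1))^-1) ^+ 2.
have c0 : 0 < c.
  rewrite /c; apply: mulr_gt0.
    by rewrite divr_gt0 // mulr_gt0 ?exprn_gt0 ?expR_gt0.
  rewrite exprn_gt0 // subr_gt0 invf_lt1 ?sqrtr_gt0 ?ltr_wpDl // ?ltW //.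
  have hP1 : 1 < P + 1 by lra.
  have hP0 : 0 < P + 1 by lra.
  by rewrite -[X in X < _]sqrtr1 ltr_sqrt.
have E12 : `[1, 2]%classic `<=` D.
  by move=> x; rewrite /D /= !in_itv /= => /andP[h _]; rewrite andbT (le_trans _ h).
have mI : measurable (`[1, 2]%classic : set R) by exact: measurable_itv.
have h1 : (0 < \int[lebesgue_measure]_(x in `[1%R, 2%R]%classic) c%:E)%E.
  have hm : lebesgue_measure (`[1%R, 2%R]%classic : set R) = 1%E.
    rewrite lebesgue_measure_itv /= lte_fin ltr1n -EFinD.
    by congr EFin; lra.
  rewrite integral_cst //.
  set m := (X in (_ * X)%E).
  have -> : m = 1%E by rewrite /m; exact: hm.
  by rewrite mule1 lte_fin.

have h3 : (\int[lebesgue_measure]_(x in `[1%R, 2%R]%classic) (f x)%:E <=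
           \int[lebesgue_measure]_(x in D) (f x)%:E)%E.
  apply: ge0_subset_integral => //.
  exact/measurable_realfun.measurable_EFinP.
have h2 : (\int[lebesgue_measure]_(x in `[1%R, 2%R]%classic) c%:E <=
           \int[lebesgue_measure]_(x in `[1%R, 2%R]%classic) (f x)%:E)%E.
  apply: ge0_le_integral => //.
  - by move=> x _; rewrite lee_fin ltW.
  - apply/measurable_realfun.measurable_EFinP.
    exact: measurable_funS mf.
  - move=> x; rewrite /= in_itv /= => /andP[x1 x2].
    rewrite lee_fin /f /c /erlang_pdf subn1 /=.
    have x0 : 0 <= x by apply: le_trans x1.
    apply: ler_pM.
    + by rewrite divr_ge0 ?mulr_ge0 ?exprn_ge0 ?expR_ge0 // ?ltW.
    + rewrite exprn_ge0 // subr_ge0 invf_le1 ?sqrtr_gt0; last by lra.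
      have hP0 : 0 <= P + 1 by lra.
      have hP1 : 1 <= P + 1 by lra.
      by rewrite -[X in X <= _]sqrtr1 ler_sqrt.
    + rewrite ler_pM2r ?invr_gt0 //.
      rewrite -mulrA ler_pM2l ?exprn_gt0 //.
      rewrite -[X in X <= _]mul1r; apply: ler_pM => //.
      * exact: exprn_ege1.
      * by rewrite ler_expR lerN2 ler_pM2l.
    + apply: phi_low => //.
      by rewrite -[X in X <= _]mul1r ler_pM2r.
have Ipos : (0 < \int[lebesgue_measure]_(x in D) (f x)%:E)%E.
  exact: (lt_le_trans h1 (le_trans h2 h3)).
rewrite /gfun /Rintegral -/D.
change (0 < fine (\int[lebesgue_measure]_(x in D) (f x)%:E)%E).
apply: fine_gt0; rewrite Ipos /=.
by rewrite -ge0_fin_numE // ltW.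
Qed.

End gf.

Lemma quad_le (R : realType) (a b s t : R) : 0 < a -> 0 < s -> s <= t ->
  a * s ^+ 2 - b * s <= Num.max 0 (a * t ^+ 2 - b * t).
Proof.
move=> a0 s0 st.
have [h|h] := lerP (a * s ^+ 2 - b * s) 0.
  by apply: (le_trans h); rewrite le_max lexx.
rewrite le_max; apply/orP; right.
have hb : b < a * s by rewrite -(ltr_pM2r s0); move: h; rewrite expr2; lra.
suff : 0 <= (t - s) * (a * (t + s) - b) by rewrite !expr2; nra.
apply: mulr_ge0; first lra.
nra.
Qed.

Lemma quad_lt (R : realType) (a b s t : R) : 0 < a -> 0 < s -> s < t ->
  0 < a * s ^+ 2 - b * s -> a * s ^+ 2 - b * s < a * t ^+ 2 - b * t.
Proof.
move=> a0 s0 st h.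
have hb : b < a * s by rewrite -(ltr_pM2r s0); move: h; rewrite expr2; lra.
suff : 0 < (t - s) * (a * (t + s) - b) by rewrite !expr2; nra.
apply: mulr_gt0; first lra.
nra.
Qed.

Lemma objE (R : realType) (h qinv delta L P : R) : 0 < L ->
  objective h qinv delta L P =
  (1 - delta) * ((log2 (1 + P * h)) * (Num.sqrt L) ^+ 2
     - (Num.sqrt (1 - ((1 + P * h) ^+ 2)^-1) * (qinv / ln 2)) * Num.sqrt L).
Proof.
move=> L0.
rewrite /objective /rateR sqrtrM ?invr_ge0 ?ltW // sqrtrV ?ltW //.
have sL : 0 < Num.sqrt L by rewrite sqrtr_gt0.
rewrite -[X in X * _ * _](sqr_sqrtr (ltW L0)).
set s := Num.sqrt L.
have sn : s != 0 by rewrite gt_eqF.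
have l2 : ln 2 != 0 :> R by rewrite gt_eqF // ln_gt0 // ltr1n.
by field; rewrite l2 sn.
Qed.

Lemma log2_gt0 (R : realType) (P h : R) : 0 < P -> 0 < h -> 0 < log2 (1 + P * h).
Proof.
move=> P0 h0; rewrite /log2 divr_gt0 // ln_gt0 //; last by rewrite ltr1n.
by rewrite ltrDl mulr_gt0.
Qed.

Lemma obj_le (R : realType) (h qinv delta L L' P : R) :
  0 < P -> 0 < h -> delta < 1 -> 0 < L -> L <= L' ->
  objective h qinv delta L P <= Num.max 0 (objective h qinv delta L' P).
Proof.
move=> P0 h0 d1 L0 LL.
have L'0 : 0 < L' by apply: lt_le_trans LL.
rewrite !objE //.
set a := log2 _; set b := _ * (_ / _).
have a0 : 0 < a := @log2_gt0 R P h P0 h0.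
have d0 : 0 < 1 - delta by lra.
have := @quad_le R ((1 - delta) * a) ((1 - delta) * b) (Num.sqrt L) (Num.sqrt L')
  (mulr_gt0 d0 a0) _ _.
rewrite sqrtr_gt0 ler_sqrt ?(ltW L'0) // => /(_ L0 LL).
by rewrite !mulrBr !mulrA.
Qed.

Lemma obj_lt (R : realType) (h qinv delta L L' P : R) :
  0 < P -> 0 < h -> delta < 1 -> 0 < L -> L < L' ->
  0 < objective h qinv delta L P ->
  objective h qinv delta L P < objective h qinv delta L' P.
Proof.
move=> P0 h0 d1 L0 LL.
have L'0 : 0 < L' by apply: lt_trans LL.
rewrite !objE //.
set a := log2 _; set b := _ * (_ / _).
have a0 : 0 < a := @log2_gt0 R P h P0 h0.
have d0 : 0 < 1 - delta by lra.
have := @quad_lt R ((1 - delta) * a) ((1 - delta) * b) (Num.sqrt L) (Num.sqrt L')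
  (mulr_gt0 d0 a0) _ _.
rewrite sqrtr_gt0 ltr_sqrt ?L'0 ?(ltW L'0) // => /(_ L0 LL).
by rewrite !mulrBr !mulrA.
Qed.



Theorem proposition1 (R : realType) (M : nat) (lam eps Lmax delta h qinv : R) :
  (1 <= M)%N -> 0 < lam -> 0 < eps -> 0 < Lmax ->
  0 < delta -> delta < 1 / 2 -> 0 < h ->
  Qfun qinv = delta ->
  let obj := objective h qinv delta in
  let feas := feasible M lam eps Lmax in
  let Ls := Lstar M lam eps Lmax in
  (forall P, 0 < P ->
     feas (Ls P) P /\
     (0 <= obj (Ls P) P -> forall L, feas L P -> obj L P <= obj (Ls P) P)) /\
  (forall L0 P0, feas L0 P0 -> 0 < obj L0 P0 ->
     (forall L P, feas L P -> obj L P <= obj L0 P0) ->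
     L0 = Ls P0 /\ (forall P, 0 < P -> obj (Ls P) P <= obj (Ls P0) P0)) /\
  (forall P0, 0 < P0 -> 0 <= obj (Ls P0) P0 ->
     (forall P, 0 < P -> obj (Ls P) P <= obj (Ls P0) P0) ->
     forall L P, feas L P -> obj L P <= obj (Ls P0) P0).
Proof.
move=> M1 lam0 eps0 Lm0 d0 d12 h0 _ obj feas Ls.
have d1 : delta < 1 by lra.
have feasLs : forall P, 0 < P -> feas (Ls P) P.
  move=> P P0; have g0 := @gfun_gt0 R M lam P M1 lam0 P0.
  have e0 : 0 < 2 * eps ^+ 2 / gfun M lam P by rewrite divr_gt0 // mulr_gt0 // exprn_gt0.
  rewrite /feas /feasible /Ls /Lstar; split; first by rewrite lt_min Lm0 e0.
  split=> //; split; last by rewrite ge_min lexx.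
  rewrite -ler_pdivlMr //.
  by rewrite ge_min lexx orbT.
have leLs : forall L P, feas L P -> L <= Ls P.
  move=> L P [L0 [P0 [Lg LM]]]; have g0 := @gfun_gt0 R M lam P M1 lam0 P0.
  by rewrite /Ls /Lstar le_min LM ler_pdivlMr.
have key : forall L P, feas L P -> obj L P <= Num.max 0 (obj (Ls P) P).
  move=> L P fL; have [L0 [P0 _]] := fL.
  exact: obj_le P0 h0 d1 L0 (leLs _ _ fL).
split.
  move=> P P0; split; first exact: feasLs.
  move=> o0 L fL; have := key L P fL.
  by rewrite max_r.
split.
  move=> L0 P0 f0 o0 opt.
  have [L00 [P00 _]] := f0.
  have eL : L0 = Ls P0.
    have := leLs _ _ f0; rewrite le_eqVlt => /orP[/eqP //|lt].
    have := @obj_lt R h qinv delta _ _ P0 P00 h0 d1 L00 lt o0.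
    by rewrite ltNge opt //; apply: feasLs.
  split=> // P P0'; rewrite -eL; apply: opt; exact: feasLs.
move=> P0 P00 o0 opt L P fL.
apply: (le_trans (key L P fL)).
rewrite ge_max o0 /=.
by apply: opt; have [_ [] ] := fL.
Qed.
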